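(* Let $b\in\mathbb N$ with $b\ge2d$, $\epsilon>0$, and let $g:(0,\infty)\to(0,\infty)$ be decreasing to zero. Fix an environment $\boldsymbol w$ such that for all $n$ large enough: (1) for all $z\in B_{n+b}$ the edge set $\mathfrak E(B_b(z))$ contains at most $3d-1$ edges with conductance $\le g(n^{1-\epsilon})$; and (2) the graph of edges with conductance $>g(n^{1-\epsilon})$ has a unique infinite connected component $\mathscr D_n$. Then for $n$ large enough the set $\mathscr I_n=B_n\setminus\mathscr D_n$ is $b$-sparse.
   Context: Lattice $\mathbb Z^d$, $d\ge2$, with nearest-neighbour edges $\mathfrak E_d$ and positive conductances $(w_e)_{e\in\mathfrak E_d}$. $B_n=[-n,n]^d\cap\mathbb Z^d$ and $B_m(z)=\{x\in\mathbb Z^d:|x-z|_\infty\le m\}$. $\mathfrak E(A)=\{\{x,x+\boldsymbol e_j\}: x\in A,\ j\in\{1,\dots,d\}\}$. An edge is called open at level $n$ if its conductance exceeds $g(n^{1-\epsilon})$; $\mathscr D_n$ is the infinite open cluster (sites) of this environment. A set $\mathscr I\subset\mathbb Z^d$ is $b$-sparse if every box $B_b(z)$, $z\in\mathbb Z^d$, contains at most one site of $\mathscr I$. *)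

(* Defs.v *)
From Stdlib Require Import Reals Lra Lia ZArith List Relations.
Open Scope R_scope.

(* Sites of Z^d are functions nat -> Z vanishing at coordinates >= d. *)
Definition site (d : nat) (x : nat -> Z) : Prop :=
  forall i : nat, (d <= i)%nat -> x i = 0%Z.

Definition shift (x : nat -> Z) (j : nat) : nat -> Z :=
  fun i => if Nat.eqb i j then (x i + 1)%Z else x i.

Definition inbox (d : nat) (m : nat) (z x : nat -> Z) : Prop :=
  site d x /\ forall i : nat, (i < d)%nat -> (Z.abs (x i - z i) <= Z.of_nat m)%Z.

Definition origin : nat -> Z := fun _ => 0%Z.

(* Conductances: w x j is the conductance of the edge {x, x + e_j}, j < d.
   Every nearest-neighbour edge of Z^d is uniquely of this form. *)
Definition Env := (nat -> Z) -> nat -> R.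

Definition thr (g : R -> R) (eps : R) (n : nat) : R :=
  g (Rpower (INR n) (1 - eps)).

Definition open_edge (w : Env) (g : R -> R) (eps : R) (n : nat)
  (x : nat -> Z) (j : nat) : Prop := w x j > thr g eps n.

Definition open_adj (d : nat) (w : Env) (g : R -> R) (eps : R) (n : nat)
  (x y : nat -> Z) : Prop :=
  site d x /\ site d y /\
  exists j : nat, (j < d)%nat /\
    ((y = shift x j /\ open_edge w g eps n x j) \/
     (x = shift y j /\ open_edge w g eps n y j)).

Definition conn (d : nat) (w : Env) (g : R -> R) (eps : R) (n : nat)
  (x y : nat -> Z) : Prop :=
  site d x /\ clos_refl_trans (nat -> Z) (open_adj d w g eps n) x y.

Definition infinite_set (S : (nat -> Z) -> Prop) : Prop :=
  forall l : list (nat -> Z), exists y, S y /\ ~ In y l.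

Definition inf_cluster (d : nat) (w : Env) (g : R -> R) (eps : R) (n : nat)
  (x : nat -> Z) : Prop :=
  infinite_set (conn d w g eps n x).

Definition unique_inf_cluster (d : nat) (w : Env) (g : R -> R) (eps : R)
  (n : nat) : Prop :=
  exists x0, inf_cluster d w g eps n x0 /\
    forall x1, inf_cluster d w g eps n x1 -> conn d w g eps n x0 x1.

Definition few_closed (d b : nat) (w : Env) (g : R -> R) (eps : R) (n : nat)
  (z : nat -> Z) : Prop :=
  forall l : list ((nat -> Z) * nat),
    NoDup l ->
    (forall e, In e l ->
       inbox d b z (fst e) /\ (snd e < d)%nat /\ w (fst e) (snd e) <= thr g eps n) ->
    (length l <= 3 * d - 1)%nat.

Definition sparse (d b : nat) (I : (nat -> Z) -> Prop) : Prop :=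
  forall z x y, site d z -> I x -> I y -> inbox d b z x -> inbox d b z y -> x = y.

(* Main.v *)
From Pilot Require Import Defs.
From Stdlib Require Import Reals Lra Lia ZArith List Relations.
From Stdlib Require Import Classical FunctionalExtensionality.
Open Scope R_scope.
Import Pilot.Defs.

Definition setc (p : nat -> Z) (k : nat) (c : Z) : nat -> Z :=
  fun i => if Nat.eqb i k then c else p i.

Definition adj (d : nat) (op : (nat -> Z) -> nat -> Prop) (x y : nat -> Z) : Prop :=
  site d x /\ site d y /\
  exists j : nat, (j < d)%nat /\
    ((y = shift x j /\ op x j) \/ (x = shift y j /\ op y j)).

Definition Cn d op := clos_refl_trans (nat -> Z) (adj d op).

Definition fewc (d b : nat) (op : (nat -> Z) -> nat -> Prop) (z : nat -> Z) : Prop :=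
  forall l : list ((nat -> Z) * nat), NoDup l ->
    (forall e, In e l -> inbox d b z (fst e) /\ (snd e < d)%nat /\ ~ op (fst e) (snd e)) ->
    (length l <= 3 * d - 1)%nat.

Lemma shift_setc p k : shift p k = setc p k (p k + 1)%Z.
Proof. apply functional_extensionality; intro i; unfold shift, setc.
  destruct (Nat.eqb_spec i k); subst; auto. Qed.

Lemma setc_same p k : setc p k (p k) = p.
Proof. apply functional_extensionality; intro i; unfold setc.
  destruct (Nat.eqb_spec i k); subst; auto. Qed.

Lemma setc_setc p k c c' : setc (setc p k c) k c' = setc p k c'.
Proof. apply functional_extensionality; intro i; unfold setc.
  destruct (Nat.eqb_spec i k); subst; auto. Qed.

Lemma setc_k p k c : setc p k c k = c.
Proof. unfold setc; rewrite Nat.eqb_refl; auto. Qed.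

Lemma setc_o p k c i : i <> k -> setc p k c i = p i.
Proof. intro H; unfold setc; destruct (Nat.eqb_spec i k); tauto. Qed.

Lemma site_setc d p k c : site d p -> (k < d)%nat -> site d (setc p k c).
Proof. intros Hp Hk i Hi; unfold setc; destruct (Nat.eqb_spec i k); [lia|auto]. Qed.

Lemma site_ext d p q : site d p -> site d q -> (forall i, (i < d)%nat -> p i = q i) -> p = q.
Proof. intros Hp Hq H; apply functional_extensionality; intro i.
  destruct (Nat.lt_ge_cases i d); auto. rewrite Hp, Hq; auto. Qed.

Lemma Cn_sym d op x y : Cn d op x y -> Cn d op y x.
Proof. intro H; induction H.
  - apply rt_step. destruct H as [Hx [Hy [j [Hj H]]]]. repeat split; auto.
    exists j; split; auto; tauto.
  - apply rt_refl.
  - eapply rt_trans; eauto. Qed.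

Lemma Cn_trans d op x y z : Cn d op x y -> Cn d op y z -> Cn d op x z.
Proof. apply rt_trans. Qed.

Lemma Cn_up d op p k : site d p -> (k < d)%nat -> op p k -> Cn d op p (setc p k (p k + 1)%Z).
Proof. intros. rewrite <- shift_setc. apply rt_step. repeat split; auto.
  rewrite shift_setc; apply site_setc; auto. exists k; split; auto. Qed.

Lemma Cn_mono d (op op' : (nat -> Z) -> nat -> Prop) x y :
  (forall p k, op p k -> op' p k) -> Cn d op x y -> Cn d op' x y.
Proof. intros Hm H; induction H.
  - apply rt_step. destruct H as [Hx [Hy [j [Hj H]]]]. repeat split; auto.
    exists j; split; auto. destruct H as [[]|[]]; [left|right]; auto.
  - apply rt_refl.
  - eapply rt_trans; eauto. Qed.

Definition inreg (d : nat) (lo hi : nat -> Z) (p : nat -> Z) : Prop :=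
  site d p /\ forall i, (i < d)%nat -> (lo i <= p i <= hi i)%Z.

Lemma regionG (d : nat) (lo hi : nat -> Z) (R : (nat -> Z) -> (nat -> Z) -> Prop) :
  (forall p, inreg d lo hi p -> R p p) ->
  (forall p q, inreg d lo hi p -> inreg d lo hi q -> R p q -> R q p) ->
  (forall p q r, inreg d lo hi p -> inreg d lo hi q -> inreg d lo hi r ->
      R p q -> R q r -> R p r) ->
  (forall p k, (k < d)%nat -> inreg d lo hi p -> inreg d lo hi (setc p k (p k + 1)%Z) ->
      R p (setc p k (p k + 1)%Z)) ->
  forall p q, inreg d lo hi p -> inreg d lo hi q -> R p q.
Proof.
  intros Hrefl Hsym Htr Hstep.
  assert (Hline : forall k, (k < d)%nat -> forall n r v, inreg d lo hi r ->
     (lo k <= v <= hi k)%Z -> Z.abs_nat (r k - v) = n -> R r (setc r k v)).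
  { intros k Hk n; induction n; intros r v Hr Hv Hn.
    - assert (r k = v) by lia. subst. rewrite setc_same; auto.
    - destruct Hr as [Hrs Hrb].
      assert (Hreg : forall c, (lo k <= c <= hi k)%Z -> inreg d lo hi (setc r k c)).
      { intros c Hc; split. apply site_setc; auto. intros i Hi.
        destruct (Nat.eq_dec i k); [subst; rewrite setc_k; auto | rewrite setc_o; auto]. }
      assert (Hrk := Hrb k Hk).
      destruct (Z_lt_ge_dec (r k) v).
      + set (r' := setc r k (r k + 1)%Z).
        assert (Hr' : inreg d lo hi r') by (apply Hreg; lia).
        assert (E : setc r' k v = setc r k v) by (unfold r'; apply setc_setc).
        assert (R r' (setc r' k v)).
        { apply IHn; auto. unfold r'; rewrite setc_k; lia. }
        rewrite E in H. apply (Htr r r' (setc r k v)); [split; auto | exact Hr' | apply Hreg; lia | | exact H].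
        apply Hstep; auto. split; auto.
      + set (r' := setc r k (r k - 1)%Z).
        assert (Hr' : inreg d lo hi r') by (apply Hreg; lia).
        assert (E : setc r' k v = setc r k v) by (unfold r'; apply setc_setc).
        assert (R r' (setc r' k v)).
        { apply IHn; auto. unfold r'; rewrite setc_k; lia. }
        rewrite E in H. apply (Htr r r' (setc r k v)); [split; auto | exact Hr' | apply Hreg; lia | | exact H].
        assert (E2 : setc r' k (r' k + 1)%Z = r).
        { unfold r'; rewrite setc_setc, setc_k. replace (r k - 1 + 1)%Z with (r k) by lia.
          apply setc_same. }
        apply Hsym; [exact Hr' | split; auto | ]. rewrite <- E2. apply Hstep; auto.
        rewrite E2; split; auto. }
  intros p q Hp Hq.
  set (h := fun j => fun i => if Nat.ltb i j then q i else p i).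
  assert (Hh : forall j, inreg d lo hi (h j)).
  { intro j; destruct Hp as [Hps Hpb]; destruct Hq as [Hqs Hqb]; split.
    - intros i Hi; unfold h; destruct (Nat.ltb i j); auto.
    - intros i Hi; unfold h; destruct (Nat.ltb i j); auto. }
  assert (Hc : forall j, (j <= d)%nat -> R p (h j)).
  { induction j; intro Hj.
    - assert (h 0%nat = p) by (apply functional_extensionality; intro i; reflexivity).
      rewrite H; apply Hrefl; auto.
    - assert (E : h (S j) = setc (h j) j (q j)).
      { apply functional_extensionality; intro i; unfold h, setc.
        destruct (Nat.eqb_spec i j); subst.
        - replace (Nat.ltb j (S j)) with true; auto.
          symmetry; apply Nat.ltb_lt; lia.
        - destruct (Nat.ltb_spec i (S j)); destruct (Nat.ltb_spec i j); auto; lia. }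
      apply (Htr p (h j) (h (S j))); auto. apply IHj; lia.
      rewrite E. apply (Hline j ltac:(lia) (Z.abs_nat (h j j - q j)) (h j) (q j)); auto.
      destruct Hq as [_ Hqb]; apply Hqb; lia. }
  assert (E : h d = q).
  { destruct Hp as [Hps _]; destruct Hq as [Hqs _].
    apply site_ext with d; auto. apply Hh.
    intros i Hi; unfold h. replace (Nat.ltb i d) with true; auto. symmetry; apply Nat.ltb_lt; auto. }
  rewrite <- E; apply Hc; auto.
Qed.

Lemma build {A B : Type} (P : A -> B -> Prop) (l : list A) :
  NoDup l -> (forall a, In a l -> exists e, P a e) ->
  (forall a a' e, In a l -> In a' l -> P a e -> P a' e -> a = a') ->
  exists le, NoDup le /\ length le = length l /\ forall e, In e le -> exists a, In a l /\ P a e.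
Proof.
  induction l as [|a l IH]; intros Hnd Hex Hinj.
  - exists nil; simpl; repeat split; auto. constructor. intros e [].
  - inversion Hnd; subst.
    destruct IH as [le [G1 [G2 G3]]]; auto.
    { intros; apply Hex; simpl; auto. }
    { intros; eapply Hinj; simpl; eauto. }
    destruct (Hex a (or_introl eq_refl)) as [e He].
    exists (e :: le); simpl; repeat split; auto.
    + constructor; auto. intro Hin. destruct (G3 e Hin) as [a' [Ha' Pa']].
      assert (a = a') by (eapply Hinj; simpl; eauto). subst; auto.
    + intros e' [<-|Hin]; [exists a; auto|]. destruct (G3 e' Hin) as [a' [? ?]]; eauto.
Qed.

Definition oslice (d b : nat) (op : (nat -> Z) -> nat -> Prop) (z : nat -> Z) (k : nat) (c : Z) : Prop :=
  forall q, inbox d b z q -> q k = c -> forall k', (k' < d)%nat -> k' <> k ->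
    (q k' < z k' + Z.of_nat b)%Z -> op q k'.

Definition frame (d b : nat) (op : (nat -> Z) -> nat -> Prop) (z q : nat -> Z) : Prop :=
  inbox d b z q /\ exists k, (k < d)%nat /\ oslice d b op z k (q k).

Lemma bad_slice d b op z k c : ~ oslice d b op z k c ->
  exists e k', inbox d b z e /\ e k = c /\ (k' < d)%nat /\ k' <> k /\ ~ op e k'.
Proof. intro H. apply NNPP; intro H'. apply H. intros q Hq Hqk k' Hk' Hne Hlt.
  apply NNPP; intro Hn. apply H'. exists q, k'; auto. Qed.

Lemma inbox_reg d b z x : inbox d b z x <->
  inreg d (fun i => z i - Z.of_nat b)%Z (fun i => z i + Z.of_nat b)%Z x.
Proof. unfold inbox, inreg; split; intros [Hs H]; split; auto; intros i Hi; specialize (H i Hi); lia. Qed.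

Lemma inbox_setc d b z x k c : inbox d b z x -> (k < d)%nat -> (Z.abs (c - z k) <= Z.of_nat b)%Z ->
  inbox d b z (setc x k c).
Proof. intros [Hs H] Hk Hc; split. apply site_setc; auto. intros i Hi.
  destruct (Nat.eq_dec i k); [subst; rewrite setc_k; auto | rewrite setc_o; auto]. Qed.

Lemma nodup_seq_build d b op z k (lo : Z) (n : nat) :
  (forall t, (t < n)%nat -> exists e k', inbox d b z e /\ e k = (lo + Z.of_nat t)%Z /\
      (k' < d)%nat /\ k' <> k /\ ~ op e k') ->
  exists le : list ((nat -> Z) * nat), NoDup le /\ length le = n /\
    forall e, In e le -> inbox d b z (fst e) /\ (snd e < d)%nat /\ ~ op (fst e) (snd e) /\
       snd e <> k /\ (lo <= fst e k < lo + Z.of_nat n)%Z.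
Proof.
  intro H.
  destruct (build (fun t (e : (nat -> Z) * nat) => inbox d b z (fst e) /\ fst e k = (lo + Z.of_nat t)%Z /\
      (snd e < d)%nat /\ snd e <> k /\ ~ op (fst e) (snd e)) (seq 0 n)) as [le [H1 [H2 H3]]].
  - apply seq_NoDup.
  - intros t Ht. apply in_seq in Ht. destruct (H t ltac:(lia)) as [e [k' He]]. exists (e, k'); simpl; tauto.
  - intros t t' e _ _ [_ [A _]] [_ [B _]]. rewrite A in B. lia.
  - exists le; split; auto; split. rewrite H2, length_seq; auto.
    intros e He'. destruct (H3 e He') as [t [Ht He]]; apply in_seq in Ht.
    destruct He as [A1 [A2 [A3 [A4 A5]]]]. split; [|split; [|split; [|split]]]; auto; rewrite A2; lia.
Qed.

Lemma OS d b op z k (lo : Z) : (1 <= d)%nat -> fewc d b op z ->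
  exists c, (lo <= c < lo + Z.of_nat (3 * d))%Z /\ oslice d b op z k c.
Proof.
  intros Hd Hf. apply NNPP; intro H.
  destruct (nodup_seq_build d b op z k lo (3 * d)) as [le [H1 [H2 H3]]].
  - intros t Ht. apply bad_slice. intro Hs. apply H. exists (lo + Z.of_nat t)%Z; split; auto. lia.
  - assert (length le <= 3 * d - 1)%nat. apply Hf; auto. intros e He; specialize (H3 e He); tauto. lia.
Qed.

Lemma slice_conn d b op z k c p q : (k < d)%nat -> oslice d b op z k c ->
  inbox d b z p -> inbox d b z q -> p k = c -> q k = c -> Cn d op p q.
Proof.
  intros Hk Hs Hp Hq Hpk Hqk.
  assert (Hc : (Z.abs (c - z k) <= Z.of_nat b)%Z) by (destruct Hp as [_ Hp]; rewrite <- Hpk; auto).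
  set (lo := fun i => if Nat.eqb i k then c else (z i - Z.of_nat b)%Z).
  set (hi := fun i => if Nat.eqb i k then c else (z i + Z.of_nat b)%Z).
  assert (Hreg : forall r, inbox d b z r -> r k = c -> inreg d lo hi r).
  { intros r [Hr Hb] Hrk; split; auto. intros i Hi; unfold lo, hi.
    destruct (Nat.eqb_spec i k); [subst; lia| specialize (Hb i Hi); lia]. }
  assert (Hbox : forall r, inreg d lo hi r -> inbox d b z r /\ r k = c).
  { intros r [Hr Hb]. assert (Hrk := Hb k Hk). unfold lo, hi in Hrk; rewrite Nat.eqb_refl in Hrk.
    split; [split; auto|lia]. intros i Hi. specialize (Hb i Hi). unfold lo, hi in Hb.
    destruct (Nat.eqb_spec i k); [subst; lia|lia]. }
  apply (regionG d lo hi (Cn d op)); auto.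
  - intros; apply rt_refl.
  - intros; apply Cn_sym; auto.
  - intros; eapply Cn_trans; eauto.
  - intros r k' Hk' Hr Hr'. destruct (Hbox r Hr) as [Hrb Hrk].
    destruct (Hbox _ Hr') as [Hrb' Hrk'].
    destruct (Nat.eq_dec k' k). { subst. rewrite setc_k in Hrk'. lia. }
    rewrite setc_o in Hrk' by auto.
    apply Cn_up; auto. destruct Hrb; auto.
    apply (Hs r Hrb Hrk k' Hk' n). destruct Hrb' as [_ Hb']. specialize (Hb' k' Hk').
    rewrite setc_k in Hb'. lia.
Qed.

Lemma cross_conn d b op z k1 k2 c1 c2 p q : (k1 < d)%nat -> (k2 < d)%nat -> k1 <> k2 -> site d z ->
  oslice d b op z k1 c1 -> oslice d b op z k2 c2 ->
  (Z.abs (c1 - z k1) <= Z.of_nat b)%Z -> (Z.abs (c2 - z k2) <= Z.of_nat b)%Z ->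
  inbox d b z p -> inbox d b z q -> p k1 = c1 -> q k2 = c2 -> Cn d op p q.
Proof.
  intros. set (r := setc (setc z k1 c1) k2 c2).
  assert (Hzz : inbox d b z z). { split; auto. intros; rewrite Z.sub_diag; simpl; lia. }
  assert (Hr : inbox d b z r) by (unfold r; apply inbox_setc; auto; apply inbox_setc; auto).
  apply Cn_trans with r.
  - apply (slice_conn d b op z k1 c1); auto. unfold r; rewrite setc_o, setc_k; auto.
  - apply (slice_conn d b op z k2 c2); auto. unfold r; rewrite setc_k; auto.
Qed.

Lemma other_dir d k : (2 <= d)%nat -> (k < d)%nat -> exists k', (k' < d)%nat /\ k' <> k.
Proof. intros. destruct k; [exists 1%nat | exists 0%nat]; split; lia. Qed.

Lemma frame_conn d b op z p q : (2 <= d)%nat -> (2 * d <= b)%nat -> site d z -> fewc d b op z ->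
  frame d b op z p -> frame d b op z q -> Cn d op p q.
Proof.
  intros Hd Hb Hz Hf [Hp [k1 [Hk1 Hs1]]] [Hq [k2 [Hk2 Hs2]]].
  assert (Hc1 : (Z.abs (p k1 - z k1) <= Z.of_nat b)%Z) by (apply Hp; auto).
  assert (Hc2 : (Z.abs (q k2 - z k2) <= Z.of_nat b)%Z) by (apply Hq; auto).
  destruct (Nat.eq_dec k1 k2).
  - subst k2. destruct (other_dir d k1) as [k3 [Hk3 Hne]]; auto.
    destruct (OS d b op z k3 (z k3 - Z.of_nat b)%Z) as [c3 [Hc3 Hs3]]; auto. lia.
    assert (Hc3' : (Z.abs (c3 - z k3) <= Z.of_nat b)%Z) by lia.
    set (r := setc z k3 c3).
    assert (Hzz : inbox d b z z). { split; auto. intros; rewrite Z.sub_diag; simpl; lia. }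
    assert (Hr : inbox d b z r) by (apply inbox_setc; auto).
    apply Cn_trans with r.
    + apply (cross_conn d b op z k1 k3 (p k1) c3); auto. unfold r; rewrite setc_k; auto.
    + apply (cross_conn d b op z k3 k1 c3 (q k1)); auto. unfold r; rewrite setc_k; auto.
  - apply (cross_conn d b op z k1 k2 (p k1) (q k2)); auto.
Qed.

Lemma frame_ne d b op z : (1 <= d)%nat -> (2 * d <= b)%nat -> site d z -> fewc d b op z ->
  exists q, frame d b op z q.
Proof.
  intros Hd Hb Hz Hf.
  destruct (OS d b op z 0%nat (z 0%nat - Z.of_nat b)%Z) as [c [Hc Hs]]; auto.
  exists (setc z 0%nat c). assert (Hz' : inbox d b z z). { split; auto. intros; rewrite Z.sub_diag; simpl; lia. }
  split. apply inbox_setc; auto. apply Z.abs_le; lia. exists 0%nat; split. lia. rewrite setc_k; auto.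
Qed.

Lemma frame_adj d b op z k p q : (2 <= d)%nat -> (2 * d <= b)%nat -> (k < d)%nat -> site d z ->
  fewc d b op z -> fewc d b op (setc z k (z k + 1)%Z) ->
  frame d b op z p -> frame d b op (setc z k (z k + 1)%Z) q -> Cn d op p q.
Proof.
  intros Hd Hb Hk Hz Hf Hf' Hp Hq.
  set (z' := setc z k (z k + 1)%Z) in *.
  assert (Hz' : site d z') by (apply site_setc; auto).
  destruct (other_dir d k) as [i [Hi Hne]]; auto.
  destruct (OS d b op z i (z i - Z.of_nat b)%Z) as [c [Hc Hs]]; auto. lia.
  destruct (OS d b op z' k (z k - Z.of_nat b + 1)%Z) as [c' [Hc' Hs']]; auto. lia.
  set (r := setc (setc z i c) k c').
  assert (Hzz : inbox d b z z). { split; auto. intros; rewrite Z.sub_diag; simpl; lia. }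
  assert (Hr : inbox d b z r). { unfold r; apply inbox_setc; auto. apply inbox_setc; auto. lia. lia. }
  assert (Hr' : inbox d b z' r).
  { split. destruct Hr; auto. intros j Hj. unfold r, z'.
    destruct (Nat.eq_dec j k). subst; rewrite !setc_k. lia.
    rewrite setc_o, (setc_o z k) by auto. destruct (Nat.eq_dec j i). subst; rewrite setc_k; lia.
    rewrite setc_o by auto. rewrite Z.sub_diag; simpl; lia. }
  apply Cn_trans with r.
  - apply (frame_conn d b op z); auto. split; auto. exists i; split; auto.
    unfold r; rewrite setc_o, setc_k; auto.
  - apply (frame_conn d b op z'); auto. split; auto. exists k; split; auto.
    unfold r; rewrite setc_k; auto.
Qed.

Lemma all_frames d b op (M : nat) : (2 <= d)%nat -> (2 * d <= b)%nat ->
  (forall z, inbox d M origin z -> fewc d b op z) ->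
  forall z z' p q, inbox d M origin z -> inbox d M origin z' ->
    frame d b op z p -> frame d b op z' q -> Cn d op p q.
Proof.
  intros Hd Hb Hf z z' p q Hz Hz'.
  revert p q.
  apply inbox_reg in Hz. apply inbox_reg in Hz'.
  refine (regionG d _ _ (fun z z' => forall p q, frame d b op z p -> frame d b op z' q -> Cn d op p q) _ _ _ _ z z' Hz Hz').
  - intros y Hy p q Hp Hq. apply (frame_conn d b op y); auto. destruct Hy; auto.
    apply Hf, inbox_reg; auto.
  - intros y y' _ _ H p q Hp Hq. apply Cn_sym; auto.
  - intros y1 y2 y3 _ H2 _ H12 H23 p q Hp Hq.
    destruct (frame_ne d b op y2) as [r Hr]; auto. lia. destruct H2; auto. apply Hf, inbox_reg; auto.
    apply Cn_trans with r; auto.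
  - intros y k Hk Hy Hy' p q Hp Hq. apply (frame_adj d b op y k); auto. destruct Hy; auto.
    apply Hf, inbox_reg; auto. apply Hf, inbox_reg; auto.
Qed.

Lemma NoDup_prod {A B : Type} (l : list A) (l' : list B) :
  NoDup l -> NoDup l' -> NoDup (list_prod l l').
Proof.
  induction l as [|a l IH]; intros H H'; simpl. constructor.
  inversion H; subst. apply NoDup_app; auto.
  - apply NoDup_map_NoDup_ForallPairs; auto. intros x y _ _ E; inversion E; auto.
  - intros [a' b'] Hin Hin'. apply in_map_iff in Hin. destruct Hin as [y [E _]]. inversion E; subst.
    apply in_prod_iff in Hin'. tauto.
Qed.

Definition WE (d b : nat) (op : (nat -> Z) -> nat -> Prop) (x p : nat -> Z) (k : nat) (s : bool)
  (e : (nat -> Z) * nat) : Prop :=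
  snd e = k /\ exists c, fst e = setc p k c /\
    (if s then (p k <= c < x k + Z.of_nat b)%Z else (x k - Z.of_nat b <= c < p k)%Z) /\
    ~ op (setc p k c) k.

Definition RF (d b : nat) (op : (nat -> Z) -> nat -> Prop) (x p : nat -> Z) (k : nat) (s : bool) : Prop :=
  forall c, (if s then (p k <= c <= x k + Z.of_nat b)%Z else (x k - Z.of_nat b <= c <= p k)%Z) ->
    Cn d op x (setc p k c).

Lemma walk_up d b op x k : (k < d)%nat -> forall n p, inbox d b x p -> Cn d op x p ->
  Z.of_nat n = (x k + Z.of_nat b - p k)%Z -> (exists e, WE d b op x p k true e) \/ RF d b op x p k true.
Proof.
  intros Hk n; induction n; intros p Hp Hc Hn.
  - right; intros c Hc'. assert (c = p k) by lia. subst; rewrite setc_same; auto.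
  - destruct (classic (op p k)) as [Ho|Ho].
    + set (p' := setc p k (p k + 1)%Z).
      assert (Hp' : inbox d b x p').
      { apply inbox_setc; auto. destruct Hp as [_ Hp]; specialize (Hp k Hk). apply Z.abs_le; lia. }
      assert (Hc' : Cn d op x p') by (apply Cn_trans with p; auto; apply Cn_up; auto; destruct Hp; auto).
      destruct (IHn p' Hp' Hc') as [[e [He1 [c [He2 [He3 He4]]]]]|Hr].
      { unfold p'; rewrite setc_k; lia. }
      * left; exists e; split; auto; exists c. unfold p' in *; rewrite setc_setc in *; rewrite setc_k in He3.
        repeat split; auto; lia.
      * right; intros c Hc2. destruct (Z.eq_dec c (p k)). subst; rewrite setc_same; auto.
        assert (E : setc p' k c = setc p k c) by (unfold p'; apply setc_setc). rewrite <- E.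
        apply Hr. unfold p'; rewrite setc_k; lia.
    + left. exists (p, k). split; auto. exists (p k). rewrite setc_same. repeat split; auto; lia.
Qed.

Lemma walk_down d b op x k : (k < d)%nat -> forall n p, inbox d b x p -> Cn d op x p ->
  Z.of_nat n = (p k - (x k - Z.of_nat b))%Z -> (exists e, WE d b op x p k false e) \/ RF d b op x p k false.
Proof.
  intros Hk n; induction n; intros p Hp Hc Hn.
  - right; intros c Hc'. assert (c = p k) by lia. subst; rewrite setc_same; auto.
  - set (p' := setc p k (p k - 1)%Z).
    assert (Hp' : inbox d b x p').
    { apply inbox_setc; auto. destruct Hp as [_ Hp]; specialize (Hp k Hk). apply Z.abs_le; lia. }
    assert (Hsp : site d p) by (destruct Hp; auto).
    assert (E2 : setc p' k (p' k + 1)%Z = p).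
    { unfold p'; rewrite setc_setc, setc_k. replace (p k - 1 + 1)%Z with (p k) by lia. apply setc_same. }
    destruct (classic (op p' k)) as [Ho|Ho].
    + assert (Hc' : Cn d op x p').
      { apply Cn_trans with p; auto. apply Cn_sym. pattern p at 1; rewrite <- E2. apply Cn_up; auto.
        apply site_setc; auto. }
      destruct (IHn p' Hp' Hc') as [[e [He1 [c [He2 [He3 He4]]]]]|Hr].
      { unfold p'; rewrite setc_k; lia. }
      * left; exists e; split; auto; exists c. assert (Epk : p' k = (p k - 1)%Z) by (unfold p'; apply setc_k).
        rewrite Epk in He3. assert (Es : setc p' k c = setc p k c) by (unfold p'; apply setc_setc).
        rewrite Es in He2, He4. repeat split; auto; lia.
      * right; intros c Hc2. destruct (Z.eq_dec c (p k)) as [Ec|Ec]. rewrite Ec, setc_same; auto.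
        assert (E : setc p' k c = setc p k c) by (unfold p'; apply setc_setc). rewrite <- E.
        apply Hr. unfold p'; rewrite setc_k; lia.
    + left. exists (p', k). split; auto. exists (p k - 1)%Z. repeat split; auto. lia.
      destruct Hp as [_ Hp]; specialize (Hp k Hk). lia.
Qed.

Lemma walk d b op x p k s : (k < d)%nat -> inbox d b x p -> Cn d op x p ->
  (exists e, WE d b op x p k s e) \/ RF d b op x p k s.
Proof.
  intros Hk Hp Hc. assert (Hb := proj2 Hp k Hk).
  destruct s.
  - apply (walk_up d b op x k Hk (Z.to_nat (x k + Z.of_nat b - p k)) p); auto. lia.
  - apply (walk_down d b op x k Hk (Z.to_nat (p k - (x k - Z.of_nat b))) p); auto. lia.
Qed.

Lemma WE_props d b op x p k s e : inbox d b x p -> (k < d)%nat -> WE d b op x p k s e ->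
  inbox d b x (fst e) /\ (snd e < d)%nat /\ ~ op (fst e) (snd e) /\ snd e = k /\
  exists c, fst e = setc p k c /\ (if s then (p k <= c)%Z else (c < p k)%Z).
Proof.
  intros Hp Hk [H1 [c [H2 [H3 H4]]]]. rewrite H2, H1.
  assert (Hb := proj2 Hp k Hk).
  split; [|split; [|split; [|split]]]; auto.
  - apply inbox_setc; auto. apply Z.abs_le; destruct s; lia.
  - exists c; split; auto. destruct s; lia.
Qed.


Lemma inbox_self d b x : site d x -> inbox d b x x.
Proof. intro; split; auto. intros; rewrite Z.sub_diag; simpl; lia. Qed.

Lemma SL d b op x p k lo n :
  (forall q, inbox d b x q -> Cn d op x q -> forall k', (k' < d)%nat -> ~ oslice d b op x k' (q k')) ->
  (k < d)%nat ->
  (forall t, (t < n)%nat -> inbox d b x (setc p k (lo + Z.of_nat t)%Z) /\ Cn d op x (setc p k (lo + Z.of_nat t)%Z)) ->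
  exists le : list ((nat -> Z) * nat), NoDup le /\ length le = n /\
    forall e, In e le -> inbox d b x (fst e) /\ (snd e < d)%nat /\ ~ op (fst e) (snd e) /\
       snd e <> k /\ (lo <= fst e k < lo + Z.of_nat n)%Z.
Proof.
  intros HB Hk H. apply nodup_seq_build. intros t Ht. destruct (H t Ht) as [H1 H2].
  apply bad_slice. pose proof (HB _ H1 H2 k Hk) as Hq; rewrite setc_k in Hq; exact Hq.
Qed.

Lemma caseI d b op x k : (1 <= d)%nat -> (2 * d <= b)%nat -> site d x -> fewc d b op x ->
  (forall q, inbox d b x q -> Cn d op x q -> forall k', (k' < d)%nat -> ~ oslice d b op x k' (q k')) ->
  (k < d)%nat -> RF d b op x x k true -> RF d b op x x k false -> False.
Proof.
  intros Hd Hb Hx Hf HB Hk R1 R2.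
  destruct (SL d b op x x k (x k - Z.of_nat b)%Z (2 * b + 1) HB Hk) as [le [H1 [H2 H3]]].
  - intros t Ht. split. apply inbox_setc; auto. apply inbox_self; auto. apply Z.abs_le; lia.
    destruct (Z_lt_ge_dec (x k - Z.of_nat b + Z.of_nat t) (x k)).
    + apply R2; lia.
    + apply R1; lia.
  - assert (length le <= 3 * d - 1)%nat. apply Hf; auto. intros e He; specialize (H3 e He); tauto. lia.
Qed.

Lemma caseB d b op x p k0 s0 : (1 <= d)%nat -> (2 * d <= b)%nat -> site d x -> fewc d b op x ->
  (forall q, inbox d b x q -> Cn d op x q -> forall k', (k' < d)%nat -> ~ oslice d b op x k' (q k')) ->
  (k0 < d)%nat -> inbox d b x p -> p k0 = x k0 -> RF d b op x p k0 s0 ->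
  (forall k, (k < d)%nat -> exists s e, WE d b op x x k s e) -> False.
Proof.
  intros Hd Hb Hx Hf HB Hk0 Hp Hpk R Hall.
  set (lo := if s0 then (x k0 + 1)%Z else (x k0 - Z.of_nat b)%Z).
  destruct (SL d b op x p k0 lo b HB Hk0) as [L1 [N1 [Len1 P1]]].
  { intros t Ht. split. apply inbox_setc; auto. apply Z.abs_le; unfold lo; destruct s0; lia.
    apply R. rewrite Hpk. unfold lo; destruct s0; lia. }
  destruct (build (fun k e => exists s, WE d b op x x k s e) (seq 0 d)) as [L2 [N2 [Len2 P2]]].
  { apply seq_NoDup. }
  { intros k Hk; apply in_seq in Hk. destruct (Hall k ltac:(lia)) as [s [e He]]. exists e, s; auto. }
  { intros a a' e _ _ [s [A _]] [s' [B _]]. congruence. }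
  assert (length (L1 ++ L2) <= 3 * d - 1)%nat.
  { apply Hf.
    - apply NoDup_app; auto. intros e He1 He2.
      destruct (P1 e He1) as [_ [_ [_ [Hne Hr]]]].
      destruct (P2 e He2) as [k [Hk [s He]]]. apply in_seq in Hk.
      destruct (WE_props d b op x x k s e) as [_ [_ [_ [Hsn [c [Hc _]]]]]]; auto. apply inbox_self; auto. lia.
      destruct (Nat.eq_dec k k0). subst; congruence.
      rewrite Hc, setc_o in Hr by auto. unfold lo in Hr; destruct s0; lia.
    - intros e He; apply in_app_or in He; destruct He as [He|He].
      + destruct (P1 e He); tauto.
      + destruct (P2 e He) as [k [Hk [s He']]]. apply in_seq in Hk.
        destruct (WE_props d b op x x k s e) as [A [B [C _]]]; auto. apply inbox_self; auto. lia. }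
  rewrite length_app, Len1, Len2, length_seq in H. lia.
Qed.

Lemma caseC d b op x j (sg : Z) : (2 <= d)%nat -> (2 * d <= b)%nat -> site d x -> fewc d b op x ->
  (j < d)%nat -> sg <> 0%Z -> (Z.abs sg <= Z.of_nat b)%Z ->
  (forall k s, (k < d)%nat -> exists e, WE d b op x x k s e) ->
  (forall k s, (k < d)%nat -> k <> j -> exists e, WE d b op x (setc x j (x j + sg)%Z) k s e) -> False.
Proof.
  intros Hd Hb Hx Hf Hj Hsg Hsgb H1 H2.
  set (x' := setc x j (x j + sg)%Z) in *.
  assert (Hxx : inbox d b x x) by (apply inbox_self; auto).
  assert (Hx' : inbox d b x x') by (apply inbox_setc; auto; apply Z.abs_le; lia).
  set (Ij := seq 0 j ++ seq (S j) (d - S j)).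
  assert (HIj : forall k, In k Ij <-> (k < d)%nat /\ k <> j).
  { intro k; unfold Ij; rewrite in_app_iff, !in_seq; lia. }
  assert (NIj : NoDup Ij).
  { unfold Ij; apply NoDup_app; try apply seq_NoDup. intros a A B; rewrite in_seq in A, B; lia. }
  assert (LIj : length Ij = (d - 1)%nat) by (unfold Ij; rewrite length_app, !length_seq; lia).
  assert (Hinj : forall p, inbox d b x p -> forall (a a' : nat * bool) e,
     WE d b op x p (fst a) (snd a) e -> WE d b op x p (fst a') (snd a') e -> (fst a < d)%nat -> (fst a' < d)%nat -> a = a').
  { intros p Hp [k s] [k' s'] e A B Hk Hk'; simpl in *.
    destruct (WE_props d b op x p k s e) as [_ [_ [_ [Hs [c [Hc Hcs]]]]]]; auto.
    destruct (WE_props d b op x p k' s' e) as [_ [_ [_ [Hs' [c' [Hc' Hcs']]]]]]; auto.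
    assert (Ekk : k' = k) by congruence. subst k'.
    assert (c = c'). { rewrite <- (setc_k p k c), <- (setc_k p k c'). congruence. }
    subst c'. rewrite Ekk in *. destruct s, s'; simpl in Hcs, Hcs'; auto; lia. }
  destruct (build (fun a e => WE d b op x x (fst a) (snd a) e) (list_prod (seq 0 d) (true :: false :: nil)))
    as [L1 [N1 [Len1 P1]]].
  { apply NoDup_prod. apply seq_NoDup. repeat constructor; simpl; intuition discriminate. }
  { intros [k s] Hin. apply in_prod_iff in Hin. destruct Hin as [Hk _]. apply in_seq in Hk. simpl. apply H1. lia. }
  { intros a a' e Ha Ha' A B. destruct a as [k s]; destruct a' as [k' s'].
    apply in_prod_iff in Ha; apply in_prod_iff in Ha'. rewrite in_seq in Ha, Ha'.
    apply (Hinj x Hxx (k, s) (k', s') e); simpl; auto; lia. }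
  destruct (build (fun a e => WE d b op x x' (fst a) (snd a) e) (list_prod Ij (true :: false :: nil)))
    as [L2 [N2 [Len2 P2]]].
  { apply NoDup_prod. auto. repeat constructor; simpl; intuition discriminate. }
  { intros [k s] Hin. apply in_prod_iff in Hin. destruct Hin as [Hk _]. apply HIj in Hk. apply H2; tauto. }
  { intros a a' e Ha Ha' A B. destruct a as [k s]; destruct a' as [k' s'].
    apply in_prod_iff in Ha; apply in_prod_iff in Ha'. rewrite HIj in Ha, Ha'.
    apply (Hinj x' Hx' (k, s) (k', s') e); simpl; auto; lia. }
  assert (length (L1 ++ L2) <= 3 * d - 1)%nat.
  { apply Hf.
    - apply NoDup_app; auto. intros e He1 He2.
      destruct (P1 e He1) as [[k s] [Hk He]]. apply in_prod_iff in Hk; rewrite in_seq in Hk.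
      destruct (P2 e He2) as [[k' s'] [Hk' He']]. apply in_prod_iff in Hk'; rewrite HIj in Hk'.
      simpl in *.
      destruct (WE_props d b op x x k s e) as [_ [_ [_ [Hs [c [Hc _]]]]]]; auto. lia.
      destruct (WE_props d b op x x' k' s' e) as [_ [_ [_ [Hs' [c' [Hc' _]]]]]]; auto. lia.
      assert (Ekk : k' = k) by congruence. subst k'.
      assert (E1 : fst e j = x j) by (rewrite Hc, setc_o; auto; intro; subst; tauto).
      assert (E2 : fst e j = (x j + sg)%Z) by (rewrite Hc'; unfold x'; rewrite setc_o, setc_k; auto; intro; subst; tauto).
      lia.
    - intros e He; apply in_app_or in He; destruct He as [He|He].
      + destruct (P1 e He) as [[k s] [Hk He']]. apply in_prod_iff in Hk; rewrite in_seq in Hk.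
        destruct (WE_props d b op x x k s e) as [A [B [C _]]]; auto. simpl; lia.
      + destruct (P2 e He) as [[k s] [Hk He']]. apply in_prod_iff in Hk; rewrite HIj in Hk.
        destruct (WE_props d b op x x' k s e) as [A [B [C _]]]; auto. simpl; lia. }
  rewrite length_app, Len1, Len2, !length_prod, length_seq, LIj in H. simpl in H. lia.
Qed.

Lemma E_lemma d b op x j (sg : Z) : (2 <= d)%nat -> (2 * d <= b)%nat -> site d x -> fewc d b op x ->
  (j < d)%nat -> (sg = 1 \/ sg = -1)%Z -> Cn d op x (setc x j (x j + sg)%Z) ->
  exists q, frame d b op x q /\ Cn d op x q.
Proof.
  intros Hd Hb Hx Hf Hj Hsg Hc. apply NNPP; intro Hn.
  assert (HB : forall q, inbox d b x q -> Cn d op x q -> forall k', (k' < d)%nat -> ~ oslice d b op x k' (q k')).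
  { intros q Hq Hcq k' Hk' Hs. apply Hn. exists q; split; auto. split; auto. exists k'; auto. }
  assert (Hxx : inbox d b x x) by (apply inbox_self; auto).
  assert (Hxc : Cn d op x x) by apply rt_refl.
  set (x' := setc x j (x j + sg)%Z) in *.
  assert (Hx' : inbox d b x x') by (apply inbox_setc; auto; apply Z.abs_le; lia).
  destruct (classic (exists k, (k < d)%nat /\ RF d b op x x k true /\ RF d b op x x k false)) as [[k [Hk [R1 R2]]]|H1].
  { apply (caseI d b op x k); auto; lia. }
  assert (Hall : forall k, (k < d)%nat -> exists s e, WE d b op x x k s e).
  { intros k Hk. destruct (walk d b op x x k true) as [[e He]|R1]; auto. exists true, e; auto.
    destruct (walk d b op x x k false) as [[e He]|R2]; auto. exists false, e; auto.
    exfalso; apply H1; exists k; auto. }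
  destruct (classic (exists k0 s0, (k0 < d)%nat /\ RF d b op x x k0 s0)) as [[k0 [s0 [Hk0 R]]]|H2].
  { apply (caseB d b op x x k0 s0); auto; lia. }
  assert (Hall2 : forall k s, (k < d)%nat -> exists e, WE d b op x x k s e).
  { intros k s Hk. destruct (walk d b op x x k s) as [He|R]; auto. exfalso; apply H2; exists k, s; auto. }
  destruct (classic (exists k1 s1, (k1 < d)%nat /\ k1 <> j /\ RF d b op x x' k1 s1)) as [[k1 [s1 [Hk1 [Hne R]]]]|H3].
  { apply (caseB d b op x x' k1 s1); auto; try lia. unfold x'; rewrite setc_o; auto. }
  apply (caseC d b op x j sg); auto; try lia.
  intros k s Hk Hne. destruct (walk d b op x x' k s) as [He|R]; auto. exfalso; apply H3; exists k, s; auto.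
Qed.

Definition iso (d : nat) (op : (nat -> Z) -> nat -> Prop) (x : nat -> Z) : Prop :=
  forall k, (k < d)%nat -> ~ op x k /\ ~ op (setc x k (x k - 1)%Z) k.

Definition NI (d : nat) (op : (nat -> Z) -> nat -> Prop) (x : nat -> Z) : Prop :=
  exists j, (j < d)%nat /\ (op x j \/ op (setc x j (x j - 1)%Z) j).

Definition dvx (x y : nat -> Z) (k : nat) : nat -> Z :=
  if (Z.abs (x k - y k) <=? 1)%Z then
    (if (x k <=? y k)%Z then setc x k (x k - 1)%Z else setc y k (y k - 1)%Z)
  else (if (x k <=? y k)%Z then setc y k (y k - 1)%Z else setc x k (x k - 1)%Z).

Lemma dvx_cases x y k :
  (dvx x y k = setc x k (x k - 1)%Z /\
     ((Z.abs (x k - y k) <= 1 /\ x k <= y k) \/ (1 < Z.abs (x k - y k) /\ y k < x k))%Z) \/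
  (dvx x y k = setc y k (y k - 1)%Z /\
     ((Z.abs (x k - y k) <= 1 /\ y k < x k) \/ (1 < Z.abs (x k - y k) /\ x k <= y k))%Z).
Proof.
  unfold dvx. destruct (Z.leb_spec (Z.abs (x k - y k)) 1); destruct (Z.leb_spec (x k) (y k)).
  - left; split; auto; left; lia.
  - right; split; auto; left; lia.
  - right; split; auto; right; lia.
  - left; split; auto; right; lia.
Qed.

Lemma S3 d b op m x y z : (1 <= d)%nat -> (1 <= b)%nat ->
  (forall c, inbox d (m + b) origin c -> fewc d b op c) ->
  inbox d m origin x -> inbox d m origin y -> inbox d b z x -> inbox d b z y -> x <> y ->
  iso d op x -> iso d op y -> False.
Proof.
  intros Hd Hb Hf [Hxs Hxm] [Hys Hym] [_ Hxz] [_ Hyz] Hne Ix Iy.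
  set (lo := fun k => (Z.max (Z.max (x k) (y k) - 2 * Z.of_nat b) (Z.min (x k) (y k) - 1))%Z).
  set (zc := fun k => if Nat.ltb k d then (lo k + Z.of_nat b)%Z else 0%Z).
  assert (Hzc : inbox d (m + b) origin zc).
  { split. intros i Hi; unfold zc; replace (Nat.ltb i d) with false; auto; symmetry; apply Nat.ltb_ge; auto.
    intros i Hi; unfold zc, origin. replace (Nat.ltb i d) with true by (symmetry; apply Nat.ltb_lt; auto).
    specialize (Hxm i Hi); specialize (Hym i Hi); unfold origin in *. unfold lo. lia. }
  assert (Hbox : forall p, site d p -> (forall k, (k < d)%nat ->
       (Z.min (x k) (y k) - 1 <= p k <= Z.max (x k) (y k))%Z /\
       (p k = Z.min (x k) (y k) - 1 -> Z.abs (x k - y k) <= 1)%Z) -> inbox d b zc p).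
  { intros p Hp H; split; auto. intros k Hk. specialize (H k Hk). specialize (Hxz k Hk); specialize (Hyz k Hk).
    unfold zc. replace (Nat.ltb k d) with true by (symmetry; apply Nat.ltb_lt; auto). unfold lo.
    destruct (Z.eq_dec (p k) (Z.min (x k) (y k) - 1)); [specialize (proj2 H e)|]; lia. }
  assert (Hxb : inbox d b zc x).
  { apply Hbox; auto. intros k Hk; split; [lia|]. intro; lia. }
  assert (Hyb : inbox d b zc y).
  { apply Hbox; auto. intros k Hk; split; [lia|]. intro; lia. }
  assert (Hdv : forall k, (k < d)%nat -> inbox d b zc (dvx x y k) /\ ~ op (dvx x y k) k /\
      dvx x y k k <> x k /\ dvx x y k k <> y k).
  { intros k Hk. destruct (Ix k Hk) as [_ A]. destruct (Iy k Hk) as [_ B].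
    destruct (dvx_cases x y k) as [[E C]|[E C]]; rewrite E; rewrite setc_k;
      (split; [apply Hbox; [apply site_setc; auto|]; intros i Hi; destruct (Nat.eq_dec i k);
        [subst; rewrite setc_k; split; [lia| intro; lia] | rewrite setc_o by auto; split; [lia | intro; lia]]
      | split; auto; lia]). }
  set (L1 := map (fun k => (x, k)) (seq 0 d)).
  set (L2 := map (fun k => (y, k)) (seq 0 d)).
  set (L3 := map (fun k => (dvx x y k, k)) (seq 0 d)).
  assert (Hnd : forall f : nat -> nat -> Z, NoDup (map (fun k => (f k, k)) (seq 0 d))).
  { intro f. apply NoDup_map_NoDup_ForallPairs. intros a a' _ _ E; inversion E; auto. apply seq_NoDup. }
  assert (Hd1 : forall e, In e L1 -> In e L2 -> False).
  { intros e A B. unfold L1, L2 in *. apply in_map_iff in A, B. destruct A as [k [<- _]].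
    destruct B as [k' [E _]]. inversion E; auto. }
  assert (Hd3 : forall (u : nat -> Z) e, (forall k, (k < d)%nat -> dvx x y k k <> u k) ->
     In e (map (fun k => (u, k)) (seq 0 d)) -> In e L3 -> False).
  { intros u e Hu A B. unfold L3 in B. apply in_map_iff in A, B. destruct A as [k [<- Hk]].
    destruct B as [k' [E Hk']]. inversion E. subst k'. apply in_seq in Hk. apply (Hu k). lia. rewrite H0; auto. }
  assert (length (L1 ++ L2 ++ L3) <= 3 * d - 1)%nat.
  { apply (Hf zc Hzc).
    - apply NoDup_app. apply Hnd. apply NoDup_app; try apply Hnd.
      + intros e A B; apply (Hd3 y e); auto. intros k Hk; apply Hdv; auto.
      + intros e A B; apply in_app_or in B; destruct B as [B|B]. eapply Hd1; eauto.
        apply (Hd3 x e); auto. intros k Hk; apply Hdv; auto.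
    - intros e He. apply in_app_or in He; destruct He as [He|He]; [|apply in_app_or in He; destruct He as [He|He]].
      + unfold L1 in He; apply in_map_iff in He; destruct He as [k [<- Hk]]; apply in_seq in Hk; simpl.
        repeat split; auto; try apply Hxb; try lia. apply Ix; lia.
      + unfold L2 in He; apply in_map_iff in He; destruct He as [k [<- Hk]]; apply in_seq in Hk; simpl.
        repeat split; auto; try apply Hyb; try lia. apply Iy; lia.
      + unfold L3 in He; apply in_map_iff in He; destruct He as [k [<- Hk]]; apply in_seq in Hk; simpl.
        destruct (Hdv k ltac:(lia)) as [A [B _]]. repeat split; auto; try apply A; lia. }
  unfold L1, L2, L3 in H. rewrite !length_app, !length_map, length_seq in H. lia.
Qed.

Lemma inbox_widen d m m' z x : inbox d m z x -> (m <= m')%nat -> inbox d m' z x.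
Proof. intros [Hs H] Hm; split; auto. intros i Hi; specialize (H i Hi); lia. Qed.

Lemma NI_step d op x : site d x -> NI d op x ->
  exists j sg, (j < d)%nat /\ (sg = 1 \/ sg = -1)%Z /\ Cn d op x (setc x j (x j + sg)%Z).
Proof.
  intros Hx [j [Hj [H|H]]].
  - exists j, 1%Z; repeat split; auto. apply Cn_up; auto.
  - exists j, (-1)%Z; repeat split; auto. apply Cn_sym.
    set (p := setc x j (x j - 1)%Z) in *.
    assert (E : setc p j (p j + 1)%Z = x).
    { unfold p; rewrite setc_setc, setc_k. replace (x j - 1 + 1)%Z with (x j) by lia. apply setc_same. }
    replace (setc x j (x j + -1)%Z) with p by (unfold p; f_equal; lia).
    rewrite <- E at 1. apply Cn_up; auto. unfold p; apply site_setc; auto.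
Qed.

Lemma Good d b op m : (2 <= d)%nat -> (2 * d <= b)%nat ->
  (forall c, inbox d (m + b) origin c -> fewc d b op c) ->
  forall x y, inbox d (m + b) origin x -> inbox d (m + b) origin y -> NI d op x -> NI d op y -> Cn d op x y.
Proof.
  intros Hd Hb Hf x y Hx Hy Nx Ny.
  destruct (NI_step d op x) as [j [sg [Hj [Hsg Hc]]]]; auto. destruct Hx; auto.
  destruct (NI_step d op y) as [j' [sg' [Hj' [Hsg' Hc']]]]; auto. destruct Hy; auto.
  destruct (E_lemma d b op x j sg) as [qx [Fx Cx]]; auto. destruct Hx; auto.
  destruct (E_lemma d b op y j' sg') as [qy [Fy Cy]]; auto. destruct Hy; auto.
  apply Cn_trans with qx; auto. apply Cn_trans with qy; [|apply Cn_sym; auto].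
  apply (all_frames d b op (m + b) Hd Hb Hf x y); auto.
Qed.

Lemma unshift_eq d x a j : site d a -> x = shift a j -> a = setc x j (x j - 1)%Z.
Proof. intros _ E; subst x. apply functional_extensionality; intro i; unfold setc, shift.
  destruct (Nat.eqb_spec i j); subst; [rewrite Nat.eqb_refl; lia | auto]. Qed.

Lemma trapped d op x0 : ~ NI d op x0 -> forall y, Cn d op x0 y -> y = x0.
Proof.
  intros HN.
  assert (forall a c, Cn d op a c -> (a = x0 -> c = x0) /\ (c = x0 -> a = x0)).
  { intros a c H; induction H.
    - destruct H as [Hx [Hy [j [Hj [[E O]|[E O]]]]]].
      + split; intro; subst.
        * exfalso; apply HN; exists j; auto.
        * exfalso; apply HN; exists j; split; auto. right. rewrite <- (unshift_eq d _ x j); auto.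
      + split; intro; subst.
        * exfalso; apply HN; exists j; split; auto. right. rewrite <- (unshift_eq d _ y j); auto.
        * exfalso; apply HN; exists j; auto.
    - tauto.
    - tauto. }
  intros y Hy; apply (H x0 y Hy); auto.
Qed.

Lemma notNI_iso d op x : ~ NI d op x -> iso d op x.
Proof. intros H k Hk; split; intro O; apply H; exists k; auto. Qed.

Lemma bound d x : site d x -> exists R : nat, forall i, (Z.abs (x i) <= Z.of_nat R)%Z.
Proof.
  intro Hs. assert (forall n, exists R : nat, forall i, (i < n)%nat -> (Z.abs (x i) <= Z.of_nat R)%Z).
  { induction n. exists 0%nat; intros; lia.
    destruct IHn as [R HR]. exists (R + Z.to_nat (Z.abs (x n)))%nat. intros i Hi.
    destruct (Nat.eq_dec i n). subst; lia. specialize (HR i ltac:(lia)); lia. }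
  destruct (H d) as [R HR]. exists R. intro i. destruct (Nat.lt_ge_cases i d); auto. rewrite Hs; auto; simpl; lia.
Qed.

Lemma pair_NI d b op m u j sg : (2 <= d)%nat -> (2 * d <= b)%nat ->
  (forall c, inbox d (m + b) origin c -> fewc d b op c) -> (j < d)%nat -> (sg = 1 \/ sg = -1)%Z ->
  inbox d m origin u -> inbox d m origin (setc u j (u j + sg)%Z) ->
  NI d op u \/ NI d op (setc u j (u j + sg)%Z).
Proof.
  intros Hd Hb Hf Hj Hsg Hu Hu'. apply NNPP; intro H.
  apply (S3 d b op m u (setc u j (u j + sg)%Z) u); auto; try lia.
  - apply inbox_self; destruct Hu; auto.
  - apply inbox_setc; auto. apply inbox_self; destruct Hu; auto. apply Z.abs_le; lia.
  - intro E. assert (E2 : u j = setc u j (u j + sg)%Z j) by (rewrite <- E; auto). rewrite setc_k in E2; lia.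
  - apply notNI_iso; tauto.
  - apply notNI_iso; tauto.
Qed.

Lemma Rpower_pos x y : 0 < Rpower x y.
Proof. unfold Rpower; apply exp_pos. Qed.

Lemma thrA g eps (a c : nat) : (forall x y, 0 < x -> x <= y -> g y <= g x) -> eps <= 1 ->
  (1 <= a)%nat -> (a <= c)%nat -> thr g eps c <= thr g eps a.
Proof.
  intros Hg He Ha Hc. unfold thr. apply Hg. apply Rpower_pos.
  apply Rle_Rpower_l. lra. split. apply lt_0_INR; lia. apply le_INR; auto.
Qed.

Lemma thrB g eps (a c : nat) : (forall x y, 0 < x -> x <= y -> g y <= g x) -> 1 <= eps ->
  (1 <= a)%nat -> (a <= c)%nat -> thr g eps a <= thr g eps c.
Proof.
  intros Hg He Ha Hc. unfold thr. apply Hg. apply Rpower_pos.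
  replace (1 - eps) with (- (eps - 1)) by ring. rewrite !Rpower_Ropp.
  apply Rinv_le_contravar. apply Rpower_pos.
  apply Rle_Rpower_l. lra. split. apply lt_0_INR; lia. apply le_INR; auto.
Qed.

Lemma few_fewc d b w g eps n z : few_closed d b w g eps n z -> fewc d b (open_edge w g eps n) z.
Proof.
  intros H l Hl Hp. apply H; auto. intros e He. destruct (Hp e He) as [A [B C]].
  repeat split; auto; try apply A. unfold open_edge in C. apply Rnot_lt_le; auto.
Qed.

Lemma inf_site d w g eps n x0 : inf_cluster d w g eps n x0 -> site d x0.
Proof. intro H. destruct (H nil) as [y [[Hs _] _]]; auto. Qed.

Lemma inf_NI d w g eps n x0 : inf_cluster d w g eps n x0 -> NI d (open_edge w g eps n) x0.
Proof.
  intro H. apply NNPP; intro HN. destruct (H (x0 :: nil)) as [y [[Hs Hc] Hy]].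
  apply Hy. left. symmetry. apply (trapped d (open_edge w g eps n) x0 HN y Hc).
Qed.

Lemma inbox_origin_bound d (R n : nat) x : site d x -> (forall i, (Z.abs (x i) <= Z.of_nat R)%Z) ->
  (R <= n)%nat -> inbox d n origin x.
Proof. intros Hs H Hn; split; auto. intros i Hi; unfold origin. specialize (H i). lia. Qed.

Lemma inbox_setc_origin d n x j sg : inbox d n origin x -> (j < d)%nat -> (sg = 1 \/ sg = -1)%Z ->
  inbox d (S n) origin (setc x j (x j + sg)%Z).
Proof. intros Hx Hj Hsg. apply inbox_setc. apply inbox_widen with n; auto.
  auto. destruct Hx as [_ Hx]; specialize (Hx j Hj); unfold origin in *; lia. Qed.

Theorem lemma4p4 (d b : nat) (eps : R) (g : R -> R) (w : Env)
  (hd : (2 <= d)%nat) (hb : (2 * d <= b)%nat) (heps : 0 < eps)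
  (hgpos : forall x, 0 < x -> 0 < g x)
  (hgdec : forall x y, 0 < x -> x <= y -> g y <= g x)
  (hglim : forall e, 0 < e -> exists M, forall x, M < x -> g x < e)
  (hwpos : forall x j, site d x -> (j < d)%nat -> 0 < w x j)
  (henv : exists N : nat, forall n : nat, (N <= n)%nat ->
     (forall z, inbox d (n + b) origin z -> few_closed d b w g eps n z) /\
     unique_inf_cluster d w g eps n) :
  exists N : nat, forall n : nat, (N <= n)%nat ->
    forall x0, inf_cluster d w g eps n x0 ->
      sparse d b (fun x => inbox d n origin x /\ ~ conn d w g eps n x0 x).
Proof.
  destruct henv as [N HN].
  assert (HF : forall n, (N <= n)%nat -> forall c, inbox d (n + b) origin c -> fewc d b (open_edge w g eps n) c).
  { intros n Hn c Hc. apply few_fewc. apply (proj1 (HN n Hn)); auto. }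
  assert (Hfin : forall n x0, (N <= n)%nat -> inf_cluster d w g eps n x0 ->
      (forall u, inbox d n origin u -> NI d (open_edge w g eps n) u -> conn d w g eps n x0 u) ->
      sparse d b (fun x => inbox d n origin x /\ ~ conn d w g eps n x0 x)).
  { intros n x0 Hn Hx0 Hcl z x y Hz [Hxn Hxc] [Hyn Hyc] Hxz Hyz.
    destruct (classic (x = y)) as [E|E]; auto. exfalso.
    apply (S3 d b (open_edge w g eps n) n x y z (ltac:(lia)) (ltac:(lia)) (HF n Hn)); auto.
    apply notNI_iso; intro H; apply Hxc; apply Hcl; auto.
    apply notNI_iso; intro H; apply Hyc; apply Hcl; auto. }
  destruct (Rle_lt_dec eps 1) as [Hle|Hgt].
  - destruct (proj2 (HN (S N) ltac:(lia))) as [v [Hv _]].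
    assert (Hvs := inf_site _ _ _ _ _ _ Hv).
    assert (HvN := inf_NI _ _ _ _ _ _ Hv).
    destruct (bound d v Hvs) as [Rv HRv].
    exists (S N + Rv)%nat. intros n Hn x0 Hx0.
    apply Hfin; auto; try lia.
    destruct (proj2 (HN n ltac:(lia))) as [r [Hr Hru]].
    assert (Hmono : forall p k, open_edge w g eps (S N) p k -> open_edge w g eps n p k).
    { intros p k H. unfold open_edge in *. assert (thr g eps n <= thr g eps (S N)).
      apply thrA; auto; lia. lra. }
    assert (Hvinf : inf_cluster d w g eps n v).
    { intro l. destruct (Hv l) as [y [[Hs Hc] Hy]]. exists y; split; auto. split; auto.
      apply (Cn_mono d (open_edge w g eps (S N))); auto. }
    assert (Hx0v : Cn d (open_edge w g eps n) x0 v).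
    { destruct (Hru x0 Hx0) as [_ A]. destruct (Hru v Hvinf) as [_ B].
      apply Cn_trans with r. apply Cn_sym; exact A. exact B. }
    intros u Hu Nu. split. apply (inf_site _ _ _ _ _ _ Hx0).
    apply Cn_trans with v; auto.
    apply (Good d b _ n hd hb (HF n ltac:(lia))).
    + apply inbox_origin_bound with Rv; auto; lia.
    + apply inbox_widen with n; auto; lia.
    + destruct HvN as [j [Hj O]]; exists j; split; auto. destruct O as [O|O]; [left|right]; apply Hmono; auto.
    + auto.
  - exists (S N). intros n Hn x0 Hx0. apply Hfin; auto; try lia.
    intros u Hu Nu.
    assert (Hx0s := inf_site _ _ _ _ _ _ Hx0).
    assert (Hx0N := inf_NI _ _ _ _ _ _ Hx0).
    destruct (bound d x0 Hx0s) as [R0 HR0].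
    set (n' := (n + R0 + 1)%nat).
    assert (Hmono : forall p k, open_edge w g eps n' p k -> open_edge w g eps n p k).
    { intros p k H. unfold open_edge in *. assert (thr g eps n <= thr g eps n').
      apply thrB; [exact hgdec | lra | lia | unfold n'; lia]. lra. }
    assert (HF' := HF n' ltac:(unfold n'; lia)).
    destruct (NI_step d _ x0 Hx0s Hx0N) as [j0 [sg0 [Hj0 [Hsg0 C0]]]].
    destruct (NI_step d _ u (proj1 Hu) Nu) as [j1 [sg1 [Hj1 [Hsg1 C1]]]].
    assert (Hx0b : inbox d n' origin x0) by (apply inbox_origin_bound with R0; auto; unfold n'; lia).
    assert (Hx0b' : inbox d n' origin (setc x0 j0 (x0 j0 + sg0)%Z)).
    { apply inbox_widen with (S R0). apply inbox_setc_origin; auto. apply inbox_origin_bound with R0; auto.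
      unfold n'; lia. }
    assert (Hub : inbox d n' origin u) by (apply inbox_widen with n; auto; unfold n'; lia).
    assert (Hub' : inbox d n' origin (setc u j1 (u j1 + sg1)%Z)).
    { apply inbox_widen with (S n). apply inbox_setc_origin; auto. unfold n'; lia. }
    assert (Ha : exists a, inbox d n' origin a /\ NI d (open_edge w g eps n') a /\ Cn d (open_edge w g eps n) x0 a).
    { destruct (pair_NI d b _ n' x0 j0 sg0 hd hb HF' Hj0 Hsg0 Hx0b Hx0b') as [A|A].
      exists x0; split; [exact Hx0b | split; [exact A | apply rt_refl]]. exists (setc x0 j0 (x0 j0 + sg0)%Z); auto. }
    assert (Hc : exists c, inbox d n' origin c /\ NI d (open_edge w g eps n') c /\ Cn d (open_edge w g eps n) c u).
    { destruct (pair_NI d b _ n' u j1 sg1 hd hb HF' Hj1 Hsg1 Hub Hub') as [A|A].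
      exists u; split; [exact Hub | split; [exact A | apply rt_refl]]. exists (setc u j1 (u j1 + sg1)%Z); split; auto; split; auto.
      apply Cn_sym; auto. }
    destruct Ha as [a [Ha1 [Ha2 Ha3]]]. destruct Hc as [c [Hc1 [Hc2 Hc3]]].
    split; auto. apply Cn_trans with a; auto. apply Cn_trans with c; auto.
    apply (Cn_mono d (open_edge w g eps n')); auto.
    apply (Good d b _ n' hd hb HF'); auto; apply inbox_widen with n'; auto; lia.
Qed.
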